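(* Let $(X,\langle\cdot,\cdot\rangle)$ be a real inner product space, $n\ge 2$, and $x,y,x_2,\ldots,x_n\in X$. Then $(x,y\mid x_n,\ldots,x_2)_*=E_n\cdot\langle x,y\mid x_n,\ldots,x_2\rangle$, where $E_2=1$ and, for $n\ge3$, $E_n=\prod_{k=2}^{n-1}\langle x_k,x_k\mid x_{k-1},\ldots,x_2\rangle^{2^{n-k-1}}$.
   Context: The $n$-iterated $2$-inner product is defined recursively: for $n=2$, $(x,y\mid z)_*:=\langle x,y\rangle\langle z,z\rangle-\langle x,z\rangle\langle z,y\rangle$; for $n\ge3$, $(x,y\mid x_n,\ldots,x_2)_*:=(x,y\mid x_{n-1},\ldots,x_2)_*\,(x_n,x_n\mid x_{n-1},\ldots,x_2)_*-(x,x_n\mid x_{n-1},\ldots,x_2)_*\,(x_n,y\mid x_{n-1},\ldots,x_2)_*$. The standard $m$-inner product ($m\ge2$) is $\langle v,w\mid v_2,\ldots,v_m\rangle:=\det(\langle a_i,b_j\rangle)_{1\le i,j\le m}$ with $(a_1,\ldots,a_m)=(v,v_2,\ldots,v_m)$ and $(b_1,\ldots,b_m)=(w,v_2,\ldots,v_m)$; in particular $\langle x,y\mid x_n,\ldots,x_2\rangle$ is the determinant of the matrix with rows indexed by $x,x_n,\ldots,x_2$ and columns indexed by $y,x_n,\ldots,x_2$. By convention, for $m=1$ (the factor $k=2$ in $E_n$), $\langle x_2,x_2\mid x_1,\ldots,x_2\rangle$ means $\langle x_2,x_2\rangle$. *)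

(* Defs.v *)
(* A real inner product space is a vector space V over the
   reals R (R : realType) with an inner product ip (symmetric, linear in the
   first argument, positive definite); these axioms appear as hypotheses of
   the theorem. *)
From mathcomp Require Import all_boot all_order all_algebra.
From mathcomp Require Import reals.
Set Implicit Arguments. Unset Strict Implicit. Unset Printing Implicit Defensive.
Import Order.TTheory GRing.Theory Num.Theory.
Local Open Scope ring_scope.

Section Defs.
Variables (R : realType) (V : lmodType R) (ip : V -> V -> R).

Definition ip2star (x y z : V) : R := ip x y * ip z z - ip x z * ip z y.

(* iter_star xs m x y = (x, y | x_{m+2}, ..., x_2)_*, where x_k = xs k *)
Fixpoint iter_star (xs : nat -> V) (m : nat) (x y : V) : R :=
  match m with
  | 0 => ip2star x y (xs 2%N)
  | m'.+1 =>
      let z := xs m'.+3 in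
      iter_star xs m' x y * iter_star xs m' z z
      - iter_star xs m' x z * iter_star xs m' z y
  end.

Definition n_iter_star (n : nat) (xs : nat -> V) (x y : V) : R :=
  iter_star xs (n - 2) x y.

Definition std_ip (v w : V) (s : seq V) : R :=
  \det (\matrix_(i < (size s).+1, j < (size s).+1)
          ip (nth v (v :: s) i) (nth w (w :: s) j)).

Definition desc_list (xs : nat -> V) (k : nat) : seq V :=
  [seq xs i | i <- rev (iota 2 (k - 1))].

Definition E_factor (n : nat) (xs : nat -> V) : R :=
  \prod_(2 <= k < n)
     (std_ip (xs k) (xs k) (desc_list xs k.-1)) ^+ (2 ^ (n - k - 1)).

End Defs.

(* Main.v *)
Require Import Defs.
From mathcomp Require Import all_boot all_order all_algebra.
From mathcomp Require Import reals ring zify.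
Import Order.TTheory GRing.Theory Num.Theory.
Local Open Scope ring_scope.

Lemma det2 (R : comNzRingType) (M : 'M[R]_2) :
  \det M = M 0 0 * M 1 1 - M 0 1 * M 1 0.
Proof.
rewrite (expand_det_row M 0) !big_ord_recl big_ord0 /cofactor !det_mx11 !mxE /=.
have -> : lift 0 0 = 1 :> 'I_2 by apply/val_inj.
have -> : lift 1 0 = 0 :> 'I_2 by apply/val_inj.
rewrite expr0 expr1 mul1r addr0 mulN1r mulrN.
idtac.
by [].
Qed.

Lemma schur (F : fieldType) m k (A : 'M[F]_m) (B : 'M_(m,k)) C (G : 'M_k) :
  G \in unitmx -> \det (block_mx A B C G) = \det G * \det (A - B *m invmx G *m C).
Proof.
move=> uG.
have -> : block_mx A B C G = block_mx 1%:M (B *m invmx G) 0 1%:M *m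
     block_mx (A - B *m invmx G *m C) 0 C G.
  rewrite mulmx_block !mul1mx !mul0mx !add0r -[B *m _ *m G]mulmxA mulVmx // mulmx1.
  by rewrite subrK.
by rewrite det_mulmx det_ublock det_lblock !det1 !mul1r mulrC.
Qed.

Definition sylvD (R : comNzRingType) k (a : 'M[R]_2) (B : 'M[R]_(2,k)) C (G : 'M[R]_k) :=
 let mn i j := \det (block_mx (a i j)%:M (row i B) (col j C) G) in
 mn 0 0 * mn 1 1 - mn 0 1 * mn 1 0 - \det G * \det (block_mx a B C G).

Arguments sylvD {R k}.

Lemma sylvD_map (R S : comNzRingType) (f : {rmorphism R -> S}) k (a : 'M[R]_2) (B : 'M[R]_(2,k)) (C : 'M[R]_(k,2)) (G : 'M[R]_k) :
  f (sylvD a B C G) = sylvD (map_mx f a) (map_mx f B) (map_mx f C) (map_mx f G).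
Proof.
rewrite /sylvD !rmorphB !rmorphM -!det_map_mx !map_block_mx !map_scalar_mx !map_row !map_col.
by rewrite !mxE.
Qed.

Lemma sylvD_unit (F : fieldType) k (a : 'M[F]_2) (B : 'M[F]_(2,k)) (C : 'M[F]_(k,2)) (G : 'M[F]_k) :
  G \in unitmx -> sylvD a B C G = 0.
Proof.
move=> uG; rewrite /sylvD.
have Hm i j : \det (block_mx (a i j)%:M (row i B) (col j C) G)
   = \det G * (a i j - (B *m invmx G *m C) i j).
  rewrite schur // det_mx11 !mxE -row_mul mulr1n; congr (_ * (_ - _)); apply: eq_bigr => l _; rewrite !mxE.
  done.
rewrite !Hm schur // det2 !mxE.
ring.
Qed.

Arguments sylvD_unit {F k}.
Lemma sylvD0 (F : numFieldType) k (a : 'M[F]_2) (B : 'M[F]_(2,k)) (C : 'M[F]_(k,2)) (G : 'M[F]_k) :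
  sylvD a B C G = 0.
Proof.
set P := sylvD (map_mx polyC a) (map_mx polyC B) (map_mx polyC C) (char_poly_mx (- G)).
have hid (t : F) : (horner_eval t \o polyC) =1 id by move=> u /=; rewrite horner_evalE hornerC.
have Ht t : map_mx (horner_eval t) (char_poly_mx (-G)) = t%:M + G.
  apply/matrixP=> i j; rewrite /char_poly_mx !mxE horner_evalE !hornerE hornerMn hornerX.
  by rewrite opprK.
have HP t : P.[t] = sylvD a B C (t%:M + G).
  rewrite -horner_evalE sylvD_map; congr sylvD; try exact: Ht; by apply/matrixP=> i j; rewrite !mxE /= horner_evalE hornerC.
have Hc : char_poly (-G) != 0 := monic_neq0 (char_poly_monic _).
have HQ : P * char_poly (-G) = 0.
  apply: (@roots_geq_poly_eq0 _ _ [seq i%:R | i <- iota 0 (size (P * char_poly (-G)))]).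
  - apply/allP => _ /mapP [i _ ->]; rewrite /root hornerM HP.
    have [hc|hc] := eqVneq (char_poly (-G)).[i%:R] 0; first by rewrite hc mulr0.
    rewrite sylvD_unit ?mul0r // unitmxE unitfE.
    by rewrite -Ht det_map_mx.
  - rewrite map_inj_uniq ?iota_uniq //; move=> i j /eqP; rewrite eqr_nat => /eqP.
    done.
  - by rewrite size_map size_iota.
have P0 : P = 0.
  by move: HQ => /eqP; rewrite mulf_eq0 (negbTE Hc) orbF => /eqP.
by have := HP 0; rewrite P0 horner0 raddf0 add0r.
Qed.
Arguments sylvD0 {F k}.
Section App.
Variables (R : realType) (V : lmodType R) (ip : V -> V -> R).

Definition rowv (s : seq V) u := \row_(j < size s) ip u (nth 0 s j).
Definition colv (s : seq V) u := \col_(i < size s) ip (nth 0 s i) u.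
Definition Gm (s : seq V) := \matrix_(i < size s, j < size s) ip (nth 0 s i) (nth 0 s j).

Lemma std_ip_block u v s :
  std_ip ip u v s = \det (block_mx (ip u v)%:M (rowv s u) (colv s v) (Gm s)).
Proof.
rewrite /std_ip; congr (\det _).
rewrite -[LHS](@submxK _ 1 (size s) 1 (size s)); f_equal; apply/matrixP=> i j; rewrite !mxE /=.
- by rewrite [i]ord1 [j]ord1 /= mulr1n.
- rewrite [i]ord1 add0n /=; congr (ip _ _); exact: set_nth_default.
- rewrite [j]ord1 add0n /=; congr (ip _ _); exact: set_nth_default.
- by rewrite !add0n; congr (ip _ _); apply: set_nth_default.
Qed.

Definition a2 x y z : 'M[R]_2 := \matrix_(i < 2, j < 2) ip (nth 0 [:: x; z] i) (nth 0 [:: y; z] j).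
Definition B2 x z s : 'M[R]_(2, size s) := \matrix_(i < 2, j < size s) ip (nth 0 [:: x; z] i) (nth 0 s j).
Definition C2 y z s : 'M[R]_(size s, 2) := \matrix_(i < size s, j < 2) ip (nth 0 s i) (nth 0 [:: y; z] j).

Lemma std_ip_block2 x y z s :
  std_ip ip x y (z :: s) = \det (block_mx (a2 x y z) (B2 x z s) (C2 y z s) (Gm s)).
Proof.
rewrite /std_ip; congr (\det _).
rewrite -[LHS](@submxK _ 2 (size s) 2 (size s)); f_equal; apply/matrixP=> i j; rewrite !mxE /=. all: try rewrite !add0n.
- case: i => [[|[|i]] hi] //; case: j => [[|[|j]] hj] //.
- case: i => [[|[|i]] hi] //=; congr (ip _ _); exact: set_nth_default.
- case: j => [[|[|j]] hj] //=; congr (ip _ _); exact: set_nth_default.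
- by congr (ip _ _); apply: set_nth_default.
Qed.

Lemma minorE x y z s (i j : 'I_2) :
  \det (block_mx ((a2 x y z) i j)%:M (row i (B2 x z s)) (col j (C2 y z s)) (Gm s))
  = std_ip ip (nth 0 [:: x; z] i) (nth 0 [:: y; z] j) s.
Proof.
rewrite std_ip_block; congr (\det (block_mx _ _ _ _)).
- by rewrite mxE.
- by apply/matrixP=> i' j'; rewrite !mxE.
- by apply/matrixP=> i' j'; rewrite !mxE.
Qed.

Lemma key x y z s :
  std_ip ip x y s * std_ip ip z z s - std_ip ip x z s * std_ip ip z y s
  = \det (Gm s) * std_ip ip x y (z :: s).
Proof.
have := sylvD0 (a2 x y z) (B2 x z s) (C2 y z s) (Gm s).
rewrite /sylvD /= !minorE /= -std_ip_block2 => /eqP; rewrite subr_eq0 => /eqP.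
done.
Qed.

Lemma Gm_cons v t : \det (Gm (v :: t)) = std_ip ip v v t.
Proof.
rewrite /std_ip; congr (\det _); apply/matrixP=> i j; rewrite !mxE.
by congr (ip _ _); apply: set_nth_default.
Qed.

Lemma desc_S (xs : nat -> V) k : (0 < k)%N -> desc_list xs k.+1 = xs k.+1 :: desc_list xs k.
Proof.
case: k => // k _; rewrite /desc_list !subn1 /=.
rewrite (_ : (2 :: iota 3 k)%N = iota 2 k ++ iota (2 + k) 1); last by rewrite -iotaD addn1.
rewrite rev_cat /=.
by rewrite add2n.
Qed.

Lemma E_S (xs : nat -> V) m : E_factor ip m.+3 xs
  = E_factor ip m.+2 xs ^+ 2 * std_ip ip (xs m.+2) (xs m.+2) (desc_list xs m.+1).
Proof.
rewrite /E_factor big_nat_recr //= subSnn subnn expn0 expr1; congr (_ * _).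
rewrite -prodrXl; apply: eq_big_nat => k /andP [h1 h2].
rewrite -exprM; congr (_ ^+ _).
rewrite -expnSr; congr (expn 2 _).
lia.
Qed.

End App.

Theorem theorem3p1 (R : realType) (V : lmodType R) (ip : V -> V -> R)
  (ip_sym : forall u v : V, ip u v = ip v u)
  (ip_linl : forall (a : R) (u v w : V), ip (a *: u + v) w = a * ip u w + ip v w)
  (ip_pos : forall u : V, u != 0 -> 0 < ip u u)
  (n : nat) (hn : (2 <= n)%N) (xs : nat -> V) (x y : V) :
  n_iter_star ip n xs x y
  = E_factor ip n xs * std_ip ip x y (desc_list xs n).
Proof.
case: n hn => [|[|m]] // _.
rewrite /n_iter_star (_ : (m.+2 - 2 = m)%N); last by lia.
elim: m x y => [|m IH] x y.
  rewrite /E_factor big_geq // mul1r /std_ip /desc_list /= det2 !mxE /=.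
  by rewrite /ip2star.
rewrite /= !IH (@E_S _ _ ip) (@desc_S _ _ xs m.+2) //.
have K := @key _ _ ip x y (xs m.+3) (desc_list xs m.+2).
have G : \det (Gm _ _ ip (desc_list xs m.+2))
    = std_ip ip (xs m.+2) (xs m.+2) (desc_list xs m.+1).
  by rewrite (@desc_S _ _ xs m.+1) // Gm_cons.
rewrite G in K.
rewrite -[RHS]mulrA -K; ring.
Qed.
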